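(* Let $r>0$ be real. For every integer $N\ge1$, $$g_r=\frac{m}{(m+1)^{r+1}}\left\{\sum_{k=0}^{N-1}(-1)^k\frac{\tilde\mu_k}{(m+1)^k}\binom{r+k}{r}+O\!\left(m^{-\lceil N/2\rceil}\right)\right\}\quad\text{as } m\to\infty.$$
   Context: For $m>0$, $g_r=\sum_{s=1}^\infty e^{-m}\frac{m^s}{s!}\,s^{-r}$ (the $r$-th inverse moment of the positive Poisson distribution times $1-e^{-m}$), and $\tilde\mu_k=\sum_{s=0}^\infty e^{-m}\frac{m^s}{s!}(s-m)^k$ is the $k$-th central moment of the Poisson distribution with mean $m$. For non-integer $r$, $\binom{r+k}{r}:=(r+1)(r+2)\cdots(r+k)/k!$ (and $=1$ for $k=0$). $\lceil x\rceil$ is the ceiling of $x$. *)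

(* Defs.v *)
From Stdlib Require Import Reals.
From Coquelicot Require Import Coquelicot.
Open Scope R_scope.

Definition poisson_w (m : R) (s : nat) : R := exp (- m) * m ^ s / INR (Factorial.fact s).

(* g_r = sum_{s>=1} e^{-m} m^s/s! * s^{-r}  (index shifted: s = n+1) *)
Definition g (r m : R) : R :=
  Series (fun n : nat => poisson_w m (S n) * Rpower (INR (S n)) (- r)).

(* k-th central moment of Poisson(m): sum_{s>=0} e^{-m} m^s/s! (s-m)^k *)
Definition mu_tilde (m : R) (k : nat) : R :=
  Series (fun s : nat => poisson_w m s * (INR s - m) ^ k).

Fixpoint rising (r : R) (k : nat) : R :=
  match k with
  | O => 1
  | S k' => rising r k' * (r + INR (S k'))
  end.

(* generalized binomial coefficient binom(r+k, r) = (r+1)...(r+k)/k! *)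
Definition gbinom (r : R) (k : nat) : R := rising r k / INR (Factorial.fact k).

Definition ceil_half (N : nat) : nat := Nat.div (N + 1) 2.

(* Main.v *)
Require Import Defs.
From Stdlib Require Import Reals Lra Lia.
From Coquelicot Require Import Coquelicot.
Open Scope R_scope.

Definition Fs (a s t : R) : R := Rpower (1 + s*t) (-a).
Definition Dk (r : R) (k : nat) : R := (-1)^k * rising r k.

Lemma locally_pos (s t : R) : 0 < 1 + s*t -> locally t (fun x => 0 < 1 + s*x).
Proof.
  intros H.
  assert (He : 0 < (1+s*t) / (Rabs s + 1)).
  { apply Rdiv_lt_0_compat; [lra| pose proof (Rabs_pos s); lra]. }
  exists (mkposreal _ He). intros y Hy. simpl in Hy.
  unfold ball in Hy; simpl in Hy; unfold AbsRing_ball, abs, minus, plus, opp in Hy; simpl in Hy.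
  assert (Rabs (s*(y - t)) < 1 + s*t).
  { rewrite Rabs_mult.
    apply Rle_lt_trans with ((Rabs s + 1) * Rabs (y-t)).
    - apply Rmult_le_compat_r; [apply Rabs_pos| lra].
    - pose proof (Rabs_pos s).
      apply Rmult_lt_reg_l with (/(Rabs s + 1)). apply Rinv_0_lt_compat; lra.
      rewrite <- Rmult_assoc, Rinv_l by lra. rewrite Rmult_1_l.
      unfold Rdiv in Hy. rewrite Rmult_comm. exact Hy. }
  pose proof (Rabs_def2 _ _ H0). nra.
Qed.

Lemma derive_closed (c b s t : R) : 0 < 1 + s*t ->
  is_derive (fun x => c * Rpower (1 + s*x) b) t (c * (b * Rpower (1+s*t) (b-1) * s)).
Proof.
  intros H. apply is_derive_scal.
  assert (H1 : is_derive (fun x => Rpower x b) (1+s*t) (b * Rpower (1+s*t) (b-1))).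
  { apply is_derive_Reals. apply derivable_pt_lim_power. exact H. }
  assert (H2 : is_derive (fun x => 1 + s*x) t s).
  { auto_derive. auto. ring. }
  pose proof (is_derive_comp _ _ _ _ _ H1 H2) as H3.
  simpl in H3. unfold scal in H3; simpl in H3; unfold mult in H3; simpl in H3.
  replace (b * Rpower (1 + s * t) (b - 1) * s) with (s * (b * Rpower (1 + s * t) (b - 1))) by ring.
  exact H3.
Qed.

Lemma Fs_derive (r s : R) (k : nat) : forall t, 0 < 1 + s*t ->
  ex_derive_n (Fs (r+1) s) k t /\
  Derive_n (Fs (r+1) s) k t = Dk r k * s^k * Rpower (1 + s*t) (-(r+1) - INR k).
Proof.
  induction k as [|k IH]; intros t Ht.
  - split. exact I. simpl. unfold Fs, Dk. simpl. rewrite Rminus_0_r. ring.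
  - assert (Hloc : locally t (fun x => Derive_n (Fs (r+1) s) k x =
        Dk r k * s^k * Rpower (1 + s*x) (-(r+1) - INR k))).
    { apply (filter_imp (fun x => 0 < 1 + s*x)). intros x Hx. apply (IH x Hx).
      apply locally_pos; exact Ht. }
    pose proof (derive_closed (Dk r k * s^k) (-(r+1) - INR k) s t Ht) as HD.
    split.
    + simpl. eapply ex_derive_ext_loc.
      { apply (filter_imp _ _ (fun x H => eq_sym H) Hloc). }
      eexists; exact HD.
    + change (Derive_n (Fs (r+1) s) (S k) t) with (Derive (Derive_n (Fs (r+1) s) k) t).
      rewrite (Derive_ext_loc _ _ t Hloc).
erewrite is_derive_unique; [|exact HD].
      unfold Dk. change (rising r (S k)) with (rising r k * (r + INR (S k))).
      rewrite S_INR.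
      replace (- (r + 1) - INR k - 1) with (- (r + 1) - (INR k + 1)) by ring.
      simpl pow. ring.
Qed.

Lemma Rpower_1_base (e : R) : Rpower 1 e = 1.
Proof. unfold Rpower. rewrite ln_1, Rmult_0_r. apply exp_0. Qed.

Lemma Rpower_anti (x y e : R) : 0 < x -> x <= y -> e <= 0 -> Rpower y e <= Rpower x e.
Proof.
  intros Hx Hxy He.
  replace e with (- - e) by ring. rewrite (Rpower_Ropp y (-e)), (Rpower_Ropp x (-e)).
  apply Rinv_le_contravar. unfold Rpower; apply exp_pos.
  apply Rle_Rpower_l; lra.
Qed.

Definition Kt (r : R) (n : nat) : R :=
  Rabs (Dk r (S n)) / INR (Factorial.fact (S n)) * Rpower (/2) (-(r+1) - INR (S n)).

Lemma Kt_nonneg r n : 0 <= Kt r n.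
Proof.
  unfold Kt. apply Rmult_le_pos. apply Rmult_le_pos. apply Rabs_pos.
  left; apply Rinv_0_lt_compat, lt_0_INR, Factorial.lt_O_fact.
  left; unfold Rpower; apply exp_pos.
Qed.

Lemma taylor_side (r : R) (hr : 0 < r) (n : nat) (s y : R) (Hs : s*s = 1) (Hy : 0 < y)
  (Hd : forall t, 0 <= t <= y -> /2 <= 1 + s*t) :
  Rabs (Rpower (1 + s*y) (-(r+1)) - sum_f_R0 (fun k => Dk r k / INR (Factorial.fact k) * (s*y)^k) n)
   <= Kt r n * y ^ (S n).
Proof.
  destruct (Taylor_Lagrange (Fs (r+1) s) n 0 y Hy) as [z [Hz Heq]].
  { intros t Ht k _. apply Fs_derive. specialize (Hd t Ht). lra. }
  unfold Fs at 1 in Heq. rewrite Heq.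
  rewrite (sum_eq _ (fun k => Dk r k / INR (Factorial.fact k) * (s*y)^k)).
  2:{ intros i _. rewrite (proj2 (Fs_derive r s i 0 ltac:(lra))).
      rewrite Rmult_0_r, Rplus_0_r, Rpower_1_base, Rpow_mult_distr, Rminus_0_r. field.
      apply not_0_INR, Nat.neq_0_lt_0, Factorial.lt_O_fact. }
  assert (Hz1 : /2 <= 1 + s*z) by (apply Hd; lra).
  rewrite (proj2 (Fs_derive r s (S n) z ltac:(lra))).
  replace (sum_f_R0 (fun k : nat => Dk r k / INR (Factorial.fact k) * (s * y) ^ k) n +
   (y - 0) ^ S n / INR (Factorial.fact (S n)) *
   (Dk r (S n) * s ^ S n * Rpower (1 + s * z) (- (r + 1) - INR (S n))) -
   sum_f_R0 (fun k : nat => Dk r k / INR (Factorial.fact k) * (s * y) ^ k) n)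
   with (y ^ S n / INR (Factorial.fact (S n)) *
   (Dk r (S n) * s ^ S n * Rpower (1 + s * z) (- (r + 1) - INR (S n)))) by (rewrite Rminus_0_r; ring).
  assert (Hs1 : Rabs (s ^ S n) = 1).
  { rewrite <- RPow_abs. replace (Rabs s) with 1. apply pow1.
    assert (Rabs s * Rabs s = 1) by (rewrite <- Rabs_mult, Hs; apply Rabs_R1).
    pose proof (Rabs_pos s). nra. }
  assert (Hf : 0 < INR (Factorial.fact (S n))) by apply lt_0_INR, Factorial.lt_O_fact.
  rewrite !Rabs_mult, Hs1. unfold Rdiv. rewrite Rabs_mult, Rabs_inv.
  rewrite (Rabs_right (INR _)) by lra.
  rewrite (Rabs_right (y ^ S n)) by (left; apply pow_lt; lra).
  rewrite (Rabs_right (Rpower _ _)) by (left; unfold Rpower; apply exp_pos).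
  unfold Kt.
  assert (HP : Rpower (1 + s * z) (- (r + 1) - INR (S n)) <= Rpower (/ 2) (- (r + 1) - INR (S n))).
  { apply Rpower_anti; try lra. pose proof (pos_INR (S n)). lra. }
  assert (0 <= Rabs (Dk r (S n)) * / INR (Factorial.fact (S n))).
  { apply Rmult_le_pos. apply Rabs_pos. left; apply Rinv_0_lt_compat; lra. }
  assert (0 < y ^ S n) by (apply pow_lt; lra).
  assert (0 < Rpower (1 + s * z) (- (r + 1) - INR (S n))) by (unfold Rpower; apply exp_pos).
  unfold Rdiv.
  replace (y ^ S n * / INR (Factorial.fact (S n)) * (Rabs (Dk r (S n)) * 1 * Rpower (1 + s * z) (- (r + 1) - INR (S n))))
    with ((Rabs (Dk r (S n)) * / INR (Factorial.fact (S n))) * Rpower (1 + s * z) (- (r + 1) - INR (S n)) * y ^ S n) by ring.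
  apply Rmult_le_compat_r. lra. apply Rmult_le_compat_l; lra.
Qed.

Lemma taylor_bound (r : R) (hr : 0 < r) (n : nat) (u : R) : -/2 <= u ->
  Rabs (Rpower (1 + u) (-(r+1)) - sum_f_R0 (fun k => Dk r k / INR (Factorial.fact k) * u^k) n)
   <= Kt r n * Rabs u ^ (S n).
Proof.
  intros Hu.
  destruct (Rtotal_order u 0) as [Hneg|[H0|Hpos]].
  - assert (Hd : forall t, 0 <= t <= -u -> /2 <= 1 + -1*t).
    { intros t Ht. lra. }
    assert (Hs1 : -1 * -1 = 1) by ring. assert (Hy : 0 < -u) by lra.
    pose proof (taylor_side r hr n (-1) (-u) Hs1 Hy Hd) as H.
    replace (-1 * - u) with u in H by ring. rewrite (Rabs_left u) by lra. exact H.
  - subst u. rewrite Rabs_R0, pow_ne_zero by lia. rewrite Rmult_0_r.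
    rewrite (sum_eq _ (fun k => match k with O => 1 | _ => 0 end)).
    2:{ intros i _. destruct i. unfold Dk. simpl. field. simpl. ring. }
    replace (sum_f_R0 (fun k : nat => match k with | 0%nat => 1 | S _ => 0 end) n) with 1.
    rewrite Rplus_0_r, Rpower_1_base. rewrite Rminus_diag, Rabs_R0. lra.
    induction n. reflexivity. rewrite tech5, <- IHn. ring.
  - assert (Hd : forall t, 0 <= t <= u -> /2 <= 1 + 1*t).
    { intros t Ht. lra. }
    pose proof (taylor_side r hr n 1 u ltac:(ring) Hpos Hd) as H.
    rewrite Rmult_1_l in H. rewrite (Rabs_right u) by lra. exact H.
Qed.

Lemma exs_scal (c : R) (a : nat -> R) : ex_series a -> ex_series (fun n => c * a n).
Proof. intros H. apply (ex_series_ext (fun n => scal c (a n))). reflexivity. exact (@ex_series_scal_l _ R_NormedModule c a H). Qed.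
Lemma exs_plus (a b : nat -> R) : ex_series a -> ex_series b -> ex_series (fun n => a n + b n).
Proof. intros Ha Hb. apply (ex_series_ext (fun n => plus (a n) (b n))). reflexivity. apply (@ex_series_plus _ R_NormedModule); auto. Qed.
Lemma exs_minus (a b : nat -> R) : ex_series a -> ex_series b -> ex_series (fun n => a n - b n).
Proof. intros Ha Hb. apply (ex_series_ext (fun n => plus (a n) (opp (b n)))). reflexivity. apply (@ex_series_minus _ R_NormedModule); auto. Qed.
Lemma exs_ext (a b : nat -> R) : (forall n, a n = b n) -> ex_series a -> ex_series b.
Proof. intros H Ha. apply (ex_series_ext a b H Ha). Qed.
Lemma exs_le (a b : nat -> R) : (forall n, Rabs (a n) <= b n) -> ex_series b -> ex_series a.
Proof. intros H Hb. apply (ex_series_le a b); auto. Qed.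

Lemma pw_pos m s : 0 < m -> 0 < poisson_w m s.
Proof.
  intros Hm. unfold poisson_w. apply Rdiv_lt_0_compat.
  apply Rmult_lt_0_compat. apply exp_pos. apply pow_lt, Hm.
  apply lt_0_INR, Factorial.lt_O_fact.
Qed.

Lemma pw_S m n : poisson_w m (S n) = m / INR (S n) * poisson_w m n.
Proof.
  unfold poisson_w. change (Factorial.fact (S n)) with (S n * Factorial.fact n)%nat. rewrite mult_INR. simpl pow.
  field. split. apply not_0_INR, Nat.neq_0_lt_0, Factorial.lt_O_fact.
  rewrite S_INR. pose proof (pos_INR n). lra.
Qed.

Lemma is_p m : is_series (poisson_w m) 1.
Proof.
  assert (H : infinite_sum (fun i => / INR (Factorial.fact i) * m ^ i) (exp m)) by exact (proj2_sig (exist_exp m)).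
  apply is_series_Reals in H.
  apply (is_series_scal_l (exp (-m))) in H.
  replace 1 with (scal (exp (-m)) (exp m)).
  apply (is_series_ext _ _ _ (fun n => eq_refl _)) in H.
  eapply is_series_ext; [|exact H]. intros n. unfold poisson_w, scal; simpl; unfold mult; simpl. field.
  apply not_0_INR, Nat.neq_0_lt_0, Factorial.lt_O_fact.
  unfold scal; simpl; unfold mult; simpl. rewrite <- exp_plus. replace (-m+m) with 0 by ring. apply exp_0.
Qed.

Lemma ex_pk m (Hm : 0 < m) (k : nat) : ex_series (fun s => poisson_w m s * (INR s + 1)^k).
Proof.
  induction k as [|k IH].
  - apply (ex_series_ext (poisson_w m)). intros; simpl; ring. eexists; apply is_p.
  - assert (H2 : ex_series (fun s => poisson_w m s * INR s * (INR s + 1)^k)).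
    { apply ex_series_incr_1.
      apply exs_le with (fun t => m * 2^k * (poisson_w m t * (INR t + 1)^k)).
      2: apply exs_scal, IH.
      intros t. rewrite pw_S.
      assert (0 < poisson_w m t) by (apply pw_pos, Hm).
      pose proof (pos_INR t).
      rewrite S_INR.
      replace (m / (INR t + 1) * poisson_w m t * (INR t + 1) * (INR t + 1 + 1) ^ k)
        with (m * poisson_w m t * (INR t + 1 + 1) ^ k) by (field; lra).
      rewrite Rabs_right.
      2:{ apply Rle_ge, Rmult_le_pos. left; apply Rmult_lt_0_compat; lra. apply pow_le; lra. }
      replace (m * 2 ^ k * (poisson_w m t * (INR t + 1) ^ k)) with (m * poisson_w m t * (2*(INR t+1))^k)
        by (rewrite Rpow_mult_distr; ring).
      apply Rmult_le_compat_l. left; apply Rmult_lt_0_compat; lra.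
      apply pow_incr. lra. }
    apply (ex_series_ext (fun s => poisson_w m s * (INR s + 1) ^ k + poisson_w m s * INR s * (INR s + 1) ^ k)).
    intros; simpl; ring.
    apply exs_plus; auto.
Qed.

Lemma ex_dom m (Hm : 0 < m) (k : nat) (A : R) (h : nat -> R) :
  (forall s, Rabs (h s) <= A * (INR s + 1)^k) -> ex_series (fun s => poisson_w m s * h s).
Proof.
  intros H. apply exs_le with (fun s => A * (poisson_w m s * (INR s + 1)^k)).
  2: apply exs_scal, ex_pk, Hm.
  intros s. rewrite Rabs_mult, Rabs_right by (left; apply pw_pos, Hm).
  pose proof (pw_pos m s Hm). specialize (H s). nra.
Qed.

Lemma shift_id m (Hm : 0 < m) (h : nat -> R) :
  ex_series (fun s => poisson_w m s * INR s * h s) ->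
  Series (fun s => poisson_w m s * INR s * h s) = m * Series (fun s => poisson_w m s * h (S s)).
Proof.
  intros H. rewrite Series_incr_1 by exact H. simpl INR at 1. rewrite Rmult_0_r, Rmult_0_l, Rplus_0_l.
  rewrite <- Series_scal_l. apply Series_ext. intros n. rewrite pw_S. field.
  rewrite S_INR. pose proof (pos_INR n). lra.
Qed.

Lemma Series_sum (f : nat -> nat -> R) (n : nat) :
  (forall i, ex_series (f i)) ->
  ex_series (fun s => sum_f_R0 (fun i => f i s) n) /\
  Series (fun s => sum_f_R0 (fun i => f i s) n) = sum_f_R0 (fun i => Series (f i)) n.
Proof.
  intros H. induction n as [|n [IH1 IH2]].
  - simpl. split. apply H. reflexivity.
  - simpl. split. apply exs_plus; auto.
    rewrite Series_plus; auto. rewrite IH2. reflexivity.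
Qed.

Lemma ex_mom m (Hm : 0 < m) k : ex_series (fun s => poisson_w m s * (INR s - m)^k).
Proof.
  apply (ex_dom m Hm k ((1+m)^k)). intros s. rewrite <- RPow_abs, <- Rpow_mult_distr.
  apply pow_incr. split. apply Rabs_pos. pose proof (pos_INR s).
  apply Rabs_le. split; nra.
Qed.

Lemma ex_mom1 m (Hm : 0 < m) k : ex_series (fun s => poisson_w m s * INR s * (INR s - m)^k).
Proof.
  apply (exs_ext (fun s => poisson_w m s * (INR s * (INR s - m)^k))). intros; ring.
  apply (ex_dom m Hm (S k) ((1+m)^k)). intros s. rewrite Rabs_mult, <- RPow_abs.
  pose proof (pos_INR s). simpl pow.
  replace ((1 + m) ^ k * ((INR s + 1) * (INR s + 1) ^ k)) with ((INR s + 1) * ((1+m) * (INR s + 1))^k)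
    by (rewrite Rpow_mult_distr; ring).
  apply Rmult_le_compat. apply Rabs_pos. apply pow_le, Rabs_pos.
  rewrite Rabs_right; lra.
  apply pow_incr. split. apply Rabs_pos.
  apply Rabs_le. split; nra.
Qed.

Lemma mu_rec m (Hm : 0 < m) k :
  mu_tilde m (S k) = m * (sum_f_R0 (fun i => Binomial.C k i * mu_tilde m i) k - mu_tilde m k).
Proof.
  unfold mu_tilde.
  rewrite (Series_ext _ (fun s => poisson_w m s * INR s * (INR s - m)^k - m * (poisson_w m s * (INR s - m)^k))).
  2:{ intros; simpl; ring. }
  rewrite Series_minus. 2: apply ex_mom1, Hm. 2: apply exs_scal, ex_mom, Hm.
  rewrite Series_scal_l. rewrite shift_id by (auto; apply ex_mom1, Hm).
  assert (Hs : forall i, ex_series (fun s => Binomial.C k i * (poisson_w m s * (INR s - m)^i))).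
  { intros i. apply exs_scal, ex_mom, Hm. }
  destruct (Series_sum (fun i s => Binomial.C k i * (poisson_w m s * (INR s - m)^i)) k Hs) as [_ HS].
  rewrite (Series_ext _ (fun s => sum_f_R0 (fun i => Binomial.C k i * (poisson_w m s * (INR s - m)^i)) k)).
  2:{ intros s. rewrite S_INR. replace (INR s + 1 - m) with ((INR s - m) + 1) by ring.
      rewrite binomial, scal_sum. apply sum_eq. intros i _. rewrite pow1. ring. }
  rewrite HS. rewrite Rmult_minus_distr_l. f_equal. f_equal. apply sum_eq. intros i _.
  rewrite Series_scal_l. reflexivity.
Qed.

Lemma mu0 m : mu_tilde m 0 = 1.
Proof.
  unfold mu_tilde. rewrite (Series_ext _ (poisson_w m)) by (intros; simpl; ring).
  apply is_series_unique, is_p.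
Qed.

Lemma mu1 m (Hm : 0 < m) : mu_tilde m 1 = 0.
Proof. rewrite mu_rec by exact Hm. simpl. rewrite mu0. unfold Binomial.C. simpl. field. Qed.

Lemma C_nonneg n i : 0 <= Binomial.C n i.
Proof.
  unfold Binomial.C. apply Rmult_le_pos. apply pos_INR. left; apply Rinv_0_lt_compat.
  apply Rmult_lt_0_compat; apply lt_0_INR, Factorial.lt_O_fact.
Qed.

Lemma C_nn n : Binomial.C n n = 1.
Proof. unfold Binomial.C. rewrite Nat.sub_diag. simpl (Factorial.fact 0). simpl INR. field.
  apply not_0_INR, Nat.neq_0_lt_0, Factorial.lt_O_fact. Qed.

Lemma mom_bound (k : nat) : exists K, 0 <= K /\
  forall j m, (j <= k)%nat -> 1 <= m -> Rabs (mu_tilde m j) <= K * m ^ (Nat.div j 2).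
Proof.
  induction k as [|k [K [HK IH]]].
  - exists 1. split. lra. intros j m Hj Hm. replace j with 0%nat by lia. rewrite mu0. simpl. rewrite Rabs_R1. lra.
  - destruct k as [|k'].
    + exists K. split. exact HK. intros j m Hj Hm. destruct j as [|[|j]]; try lia.
      * apply IH; auto.
      * rewrite mu1 by lra. rewrite Rabs_R0. apply Rmult_le_pos. exact HK. apply pow_le; lra.
    + set (B := sum_f_R0 (fun i => Binomial.C (S k') i) k').
      assert (HB : 0 <= B). { unfold B. apply cond_pos_sum. intros; apply C_nonneg. }
      exists (Rmax K (B * K)). split. apply Rle_trans with K; auto. apply Rmax_l.
      intros j m Hj Hm. destruct (Nat.eq_dec j (S (S k'))) as [->|Hne].
      2:{ apply Rle_trans with (K * m ^ Nat.div j 2). apply IH; auto. lia.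
          apply Rmult_le_compat_r. apply pow_le; lra. apply Rmax_l. }
      rewrite mu_rec by lra. rewrite tech5.
      replace (sum_f_R0 (fun i : nat => Binomial.C (S k') i * mu_tilde m i) k' + Binomial.C (S k') (S k') * mu_tilde m (S k') - mu_tilde m (S k'))
        with (sum_f_R0 (fun i : nat => Binomial.C (S k') i * mu_tilde m i) k').
      2:{ rewrite C_nn. ring. }
      rewrite Rabs_mult, (Rabs_right m) by lra.
      assert (Hs : Rabs (sum_f_R0 (fun i : nat => Binomial.C (S k') i * mu_tilde m i) k') <= B * K * m ^ Nat.div k' 2).
      { eapply Rle_trans. apply sum_f_R0_triangle.
        unfold B. rewrite Rmult_assoc, Rmult_comm, scal_sum. apply sum_Rle. intros i Hi.
        rewrite Rabs_mult, (Rabs_right (Binomial.C _ _)) by (apply Rle_ge, C_nonneg).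
        apply Rmult_le_compat_l. apply C_nonneg.
        eapply Rle_trans. apply IH; [lia|exact Hm].
        apply Rmult_le_compat_l. exact HK. apply Rle_pow. exact Hm. apply Nat.div_le_mono; lia. }
      replace (Nat.div (S (S k')) 2) with (S (Nat.div k' 2)).
      2:{ replace (S (S k')) with (k' + 1 * 2)%nat by lia. rewrite Nat.div_add by lia. lia. }
      change (m ^ S (Nat.div k' 2)) with (m * m ^ (Nat.div k' 2)).
      apply Rle_trans with (m * (B * K * m ^ Nat.div k' 2)).
      apply Rmult_le_compat_l; lra.
      assert (0 <= m ^ Nat.div k' 2) by (apply pow_le; lra).
      assert (B * K <= Rmax K (B*K)) by apply Rmax_r.
      replace (m * (B * K * m ^ Nat.div k' 2)) with ((B*K)*(m*m ^ Nat.div k' 2)) by ring.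
      apply Rmult_le_compat_r. apply Rmult_le_pos; lra. assumption.
Qed.

Lemma fb (m q K mu : R) (i h j : nat) : 1 <= m -> m <= q -> (i + h <= j)%nat -> 0 <= K ->
  Rabs mu <= K * m ^ i -> Rabs (mu / q ^ j) <= K / m ^ h.
Proof.
  intros Hm Hq Hij HK Hmu.
  assert (Hmi : 0 < m ^ i) by (apply pow_lt; lra).
  assert (Hmh : 0 < m ^ h) by (apply pow_lt; lra).
  assert (Hqj : 0 < q ^ j) by (apply pow_lt; lra).
  assert (Hle : m ^ i * m ^ h <= q ^ j).
  { rewrite <- pow_add. apply Rle_trans with (m ^ j). apply Rle_pow; auto.
    apply pow_incr; lra. }
  unfold Rdiv. rewrite Rabs_mult, Rabs_inv, (Rabs_right (q^j)) by lra.
  apply Rle_trans with (K * m ^ i * / q ^ j).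
  apply Rmult_le_compat_r. left; apply Rinv_0_lt_compat; lra. exact Hmu.
  apply Rle_trans with (K * m ^ i * / (m ^ i * m ^ h)).
  apply Rmult_le_compat_l. apply Rmult_le_pos; lra.
  apply Rinv_le_contravar. apply Rmult_lt_0_compat; lra. exact Hle.
  right. field. split; lra.
Qed.

Lemma Eu (m : R) (Hm : 0 < m) (j : nat) :
  ex_series (fun s => poisson_w m s * ((INR s - m) / (m+1)) ^ j) /\
  Series (fun s => poisson_w m s * ((INR s - m) / (m+1)) ^ j) = mu_tilde m j / (m+1) ^ j.
Proof.
  assert (He : forall s, poisson_w m s * ((INR s - m) / (m+1)) ^ j = / (m+1)^j * (poisson_w m s * (INR s - m)^j)).
  { intros s. unfold Rdiv. rewrite Rpow_mult_distr, pow_inv. ring. }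
  split.
  - eapply exs_ext. intros s; symmetry; apply He. apply exs_scal, ex_mom, Hm.
  - rewrite (Series_ext _ _ He), Series_scal_l. unfold mu_tilde, Rdiv. ring.
Qed.

Lemma Rpower_inv_base (q a : R) : 0 < q -> Rpower (/ q) (- a) = Rpower q a.
Proof. intros Hq. unfold Rpower. rewrite ln_Rinv by exact Hq. f_equal. ring. Qed.

Lemma Rpower_div_base (x q a : R) : 0 < x -> 0 < q ->
  Rpower (x / q) (- a) = Rpower q a * Rpower x (- a).
Proof.
  intros Hx Hq. unfold Rpower, Rdiv. rewrite ln_mult, ln_Rinv; auto.
  rewrite <- exp_plus. f_equal. ring. apply Rinv_0_lt_compat, Hq.
Qed.

Definition L0 (r : R) (n : nat) : R := sum_f_R0 (fun k => Rabs (Dk r k / INR (Factorial.fact k))) n.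

Lemma L0_nonneg r n : 0 <= L0 r n.
Proof. unfold L0. apply cond_pos_sum. intros; apply Rabs_pos. Qed.

Lemma Rp_bound (r : R) (hr : 0 < r) (n h J : nat) (q u : R) : S n = (2 * h)%nat -> 1 <= q -> / q <= 1 + u ->
  Rabs (Rpower (1 + u) (-(r+1)) - sum_f_R0 (fun k => Dk r k / INR (Factorial.fact k) * u^k) n)
   <= Kt r n * (u^2)^h + (Rpower q (r+1) + L0 r n) * (4 * u^2)^J.
Proof.
  intros Hn Hq Hu.
  assert (Hq0 : 0 < /q) by (apply Rinv_0_lt_compat; lra).
  assert (Hpq : 0 < Rpower q (r+1)) by (unfold Rpower; apply exp_pos).
  pose proof (L0_nonneg r n) as HL.
  assert (H2 : 0 <= (4 * u^2)^J) by (apply pow_le; nra).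
  assert (Hh : 0 <= (u^2)^h) by (apply pow_le; nra).
  pose proof (Kt_nonneg r n) as HK.
  destruct (Rle_dec (-/2) u) as [Hge|Hlt].
  - eapply Rle_trans. apply taylor_bound; auto.
    rewrite Hn, pow_mult, pow2_abs.
    assert (0 <= (Rpower q (r + 1) + L0 r n) * (4 * u ^ 2) ^ J) by (apply Rmult_le_pos; lra).
    lra.
  - assert (Hu1 : Rabs u <= 1).
    { apply Rabs_le. assert (/q <= 1). { rewrite <- Rinv_1. apply Rinv_le_contravar; lra. } lra. }
    assert (HF : Rabs (Rpower (1 + u) (-(r+1))) <= Rpower q (r+1)).
    { rewrite Rabs_right by (left; unfold Rpower; apply exp_pos).
      rewrite <- (Rpower_inv_base q (r+1)) by lra. apply Rpower_anti; lra. }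
    assert (HT : Rabs (sum_f_R0 (fun k => Dk r k / INR (Factorial.fact k) * u^k) n) <= L0 r n).
    { eapply Rle_trans. apply sum_f_R0_triangle. unfold L0. apply sum_Rle. intros k _.
      rewrite Rabs_mult. rewrite <- RPow_abs.
      assert (Rabs u ^ k <= 1). { rewrite <- (pow1 k). apply pow_incr. split; [apply Rabs_pos|lra]. }
      assert (0 <= Rabs (Dk r k / INR (Factorial.fact k))) by apply Rabs_pos.
      assert (0 <= Rabs u ^ k) by (apply pow_le, Rabs_pos). nra. }
    assert (H1 : 1 <= (4 * u^2)^J) by (apply pow_R1_Rle; nra).
    eapply Rle_trans. apply Rabs_triang. rewrite Rabs_Ropp.
    assert (0 <= Kt r n * (u ^ 2) ^ h) by (apply Rmult_le_pos; lra).
    assert ((Rpower q (r + 1) + L0 r n) * 1 <= (Rpower q (r + 1) + L0 r n) * (4 * u ^ 2) ^ J)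
      by (apply Rmult_le_compat_l; lra).
    lra.
Qed.

Lemma F_le (r q u : R) : 0 < q -> / q <= 1 + u -> 0 <= r ->
  Rabs (Rpower (1 + u) (-(r+1))) <= Rpower q (r+1).
Proof.
  intros Hq Hu Hr. assert (0 < /q) by (apply Rinv_0_lt_compat; lra).
  rewrite Rabs_right by (left; unfold Rpower; apply exp_pos).
  rewrite <- (Rpower_inv_base q (r+1)) by lra. apply Rpower_anti; lra.
Qed.

Lemma half_facts (N : nat) : (1 <= N)%nat -> (1 <= ceil_half N)%nat /\
  (N = 2 * ceil_half N \/ S N = 2 * ceil_half N)%nat.
Proof.
  intros HN. unfold ceil_half.
  pose proof (Nat.div_mod (N+1) 2 ltac:(lia)).
  pose proof (Nat.mod_upper_bound (N+1) 2 ltac:(lia)). lia.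
Qed.

Theorem theorem2 (r : R) (hr : 0 < r) (N : nat) (hN : (1 <= N)%nat) :
  exists C M : R, forall m : R, M < m ->
    exists err : R,
      Rabs err <= C / m ^ (ceil_half N) /\
      g r m = m / Rpower (m + 1) (r + 1) *
              (sum_f_R0 (fun k => (-1) ^ k * mu_tilde m k / (m + 1) ^ k * gbinom r k)
                        (N - 1) + err).
Proof.
  destruct (half_facts N hN) as [Hh1 Hpar].
  set (h := ceil_half N) in *.
  set (n := (2 * h - 1)%nat).
  assert (Hn : S n = (2 * h)%nat) by (unfold n; lia).
  destruct (INR_unbounded (r+1)) as [A HA].
  set (J := (A + h)%nat).
  destruct (mom_bound (2*J)) as [Cm [HCm HB]].
  set (cN := Rabs (Dk r N / INR (Factorial.fact N))).
  set (a := r + 1).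
  exists (Kt r n * Cm + (1 + L0 r n) * 4^J * 2^A * Cm + cN * Cm), 1.
  intros m Hm.
  set (q := m + 1).
  set (Ssum := sum_f_R0 (fun k => (-1) ^ k * mu_tilde m k / q ^ k * gbinom r k) (N - 1)).
  assert (Hm0 : 0 < m) by lra.
  assert (Hq : 1 <= q) by (unfold q; lra).
  assert (Hpq : 0 < Rpower q a) by (unfold Rpower; apply exp_pos).
  exists (Rpower q a / m * g r m - Ssum). split.
  2:{ field. split; lra. }
  set (c := fun k => Dk r k / INR (Factorial.fact k)).
  set (u := fun s : nat => (INR s - m) / q).
  assert (Hu : forall s, / q <= 1 + u s).
  { intros s. unfold u. pose proof (pos_INR s).
    replace (1 + (INR s - m) / q) with ((INR s + 1) / q) by (unfold q; field; lra).
    unfold Rdiv. rewrite <- (Rmult_1_l (/ q)) at 1. apply Rmult_le_compat_r.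
    left; apply Rinv_0_lt_compat; lra. lra. }
  assert (HEu : forall j, ex_series (fun s => poisson_w m s * u s ^ j) /\ Series (fun s => poisson_w m s * u s ^ j) = mu_tilde m j / q ^ j).
  { intros j. exact (Eu m Hm0 j). }
  set (F := fun s => Rpower (1 + u s) (-a)).
  set (T := fun s => sum_f_R0 (fun k => c k * u s ^ k) n).
  set (v := fun k => c k * (mu_tilde m k / q ^ k)).
  assert (HG : Rpower q a / m * g r m = Series (fun s => poisson_w m s * F s)).
  { unfold g. rewrite (Series_ext _ (fun k => m * (poisson_w m k * Rpower (INR k + 1) (-a)))).
    2:{ intros k. rewrite pw_S, S_INR. pose proof (pos_INR k).
        unfold a. replace (-(r+1)) with (-r + -1) by ring.
        rewrite Rpower_plus, (Rpower_Ropp _ 1), Rpower_1 by lra. field. lra. }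
    rewrite Series_scal_l.
    transitivity (Rpower q a * Series (fun k => poisson_w m k * Rpower (INR k + 1) (- a))).
    field. lra.
    rewrite <- Series_scal_l. apply Series_ext. intros s. unfold F, u.
    pose proof (pos_INR s).
    replace (1 + (INR s - m) / q) with ((INR s + 1) / q) by (unfold q; field; lra).
    rewrite Rpower_div_base by lra. ring. }
  assert (HS : Ssum = sum_f_R0 v (N - 1)).
  { unfold Ssum. apply sum_eq. intros k _. unfold v, c, Dk, gbinom. field.
    split. apply pow_nonzero; lra. apply not_0_INR, Nat.neq_0_lt_0, Factorial.lt_O_fact. }
  assert (Hf : forall j, ex_series (fun s => c j * (poisson_w m s * u s ^ j))).
  { intros j. apply exs_scal, (HEu j). }
  destruct (Series_sum (fun j s => c j * (poisson_w m s * u s ^ j)) n Hf) as [HT1 HT2].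
  assert (HpT : forall s, poisson_w m s * T s = sum_f_R0 (fun j => c j * (poisson_w m s * u s ^ j)) n).
  { intros s. unfold T. rewrite scal_sum. apply sum_eq. intros; ring. }
  assert (HpF : ex_series (fun s => poisson_w m s * F s)).
  { apply (ex_dom m Hm0 0 (Rpower q a)). intros s. rewrite pow_O, Rmult_1_r.
    apply F_le; auto; lra. }
  assert (HpFT : ex_series (fun s => poisson_w m s * (F s - T s))).
  { eapply exs_ext. 2: apply (exs_minus _ _ HpF HT1). intros s. simpl. rewrite <- HpT. ring. }
  assert (Hexp : Series (fun s => poisson_w m s * F s) =
                 Series (fun s => poisson_w m s * (F s - T s)) + sum_f_R0 v n).
  { rewrite (Series_ext (fun s => poisson_w m s * (F s - T s))
       (fun s => poisson_w m s * F s - sum_f_R0 (fun j => c j * (poisson_w m s * u s ^ j)) n)).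
    2:{ intros s. rewrite <- HpT. ring. }
    rewrite Series_minus by auto. rewrite HT2.
    replace (sum_f_R0 (fun i => Series (fun s => c i * (poisson_w m s * u s ^ i))) n) with (sum_f_R0 v n).
    ring. apply sum_eq. intros i _. unfold v. rewrite Series_scal_l, (proj2 (HEu i)). reflexivity. }
  rewrite HG, Hexp, HS.
  set (E' := Series (fun s => poisson_w m s * (F s - T s))).
  set (Lq := (Rpower q a + L0 r n) * 4 ^ J).
  set (Bnd := fun s => Kt r n * (u s ^ 2) ^ h + (Rpower q a + L0 r n) * (4 * u s ^ 2) ^ J).
  assert (HR : forall s, Rabs (F s - T s) <= Bnd s).
  { intros s. unfold F, T, c, Bnd, a. apply Rp_bound; auto. }
  assert (HpB : forall s, poisson_w m s * Bnd s =
      Kt r n * (poisson_w m s * u s ^ (2*h)) + Lq * (poisson_w m s * u s ^ (2*J))).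
  { intros s. unfold Bnd, Lq. rewrite !pow_mult, Rpow_mult_distr. ring. }
  assert (HexB : ex_series (fun s => poisson_w m s * Bnd s)).
  { eapply exs_ext. intros s; symmetry; apply HpB.
    apply exs_plus; apply exs_scal; apply HEu. }
  assert (HSB : Series (fun s => poisson_w m s * Bnd s) =
      Kt r n * (mu_tilde m (2*h) / q ^ (2*h)) + Lq * (mu_tilde m (2*J) / q ^ (2*J))).
  { rewrite (Series_ext _ _ HpB). rewrite Series_plus by (apply exs_scal; apply HEu).
    rewrite !Series_scal_l, (proj2 (HEu (2*h)%nat)), (proj2 (HEu (2*J)%nat)). reflexivity. }
  assert (HE' : Rabs E' <= Kt r n * (mu_tilde m (2*h) / q ^ (2*h)) + Lq * (mu_tilde m (2*J) / q ^ (2*J))).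
  { rewrite <- HSB. unfold E'.
    assert (Hpt : forall s, 0 <= Rabs (poisson_w m s * (F s - T s)) <= poisson_w m s * Bnd s).
    { intros s. split. apply Rabs_pos. rewrite Rabs_mult, (Rabs_right (poisson_w m s)).
      apply Rmult_le_compat_l. left; apply pw_pos, Hm0. apply HR.
      left; apply pw_pos, Hm0. }
    eapply Rle_trans. apply Series_Rabs.
    { apply exs_le with (fun s => poisson_w m s * Bnd s); auto.
      intros s. rewrite Rabs_Rabsolu. apply Hpt. }
    apply Series_le; auto. }
  assert (Hmq : m <= q) by (unfold q; lra).
  assert (Hmh : 0 < m ^ h) by (apply pow_lt; lra).
  set (W := Cm / m ^ h).
  assert (HW : 0 <= W) by (unfold W; apply Rmult_le_pos; [lra| left; apply Rinv_0_lt_compat; lra]).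
  assert (X1b : Rabs (mu_tilde m (2*h) / q ^ (2*h)) <= W).
  { apply (fb m q Cm _ h h (2*h)); try lra; try lia.
    replace h with (Nat.div (2*h) 2) at 2 by (rewrite Nat.mul_comm, Nat.div_mul; lia).
    apply HB; [unfold J; lia| lra]. }
  assert (X2b : Rabs (mu_tilde m (2*J) / q ^ (2*J)) <= Cm / m ^ J).
  { apply (fb m q Cm _ J J (2*J)); try lra; try lia.
    replace J with (Nat.div (2*J) 2) at 2 by (rewrite Nat.mul_comm, Nat.div_mul; lia).
    apply HB; [lia| lra]. }
  set (Q := (1 + L0 r n) * 4 ^ J * 2 ^ A).
  assert (HQ0 : 0 <= Q).
  { unfold Q. pose proof (L0_nonneg r n). apply Rmult_le_pos. apply Rmult_le_pos. lra.
    apply pow_le; lra. apply pow_le; lra. }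
  assert (HLq : 0 <= Lq <= Q * m ^ A).
  { pose proof (L0_nonneg r n) as HL.
    assert (H4 : 0 < 4 ^ J) by (apply pow_lt; lra).
    assert (Hp1 : 1 <= Rpower q a).
    { rewrite <- (Rpower_O q) by lra. apply Rle_Rpower; auto. unfold a; lra. }
    assert (Hp2 : Rpower q a <= 2 ^ A * m ^ A).
    { apply Rle_trans with (Rpower q (INR A)). apply Rle_Rpower; auto. unfold a; lra.
      rewrite Rpower_pow by lra. rewrite <- Rpow_mult_distr. apply pow_incr. unfold q; lra. }
    unfold Lq, Q. split. apply Rmult_le_pos; lra.
    apply Rle_trans with ((1 + L0 r n) * Rpower q a * 4 ^ J).
    apply Rmult_le_compat_r; nra.
    replace ((1 + L0 r n) * 4 ^ J * 2 ^ A * m ^ A) with ((1 + L0 r n) * (2 ^ A * m ^ A) * 4 ^ J) by ring.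
    apply Rmult_le_compat_r. lra. apply Rmult_le_compat_l; lra. }
  assert (HTe2 : Lq * (mu_tilde m (2*J) / q ^ (2*J)) <= Q * W).
  { apply Rle_trans with (Lq * Rabs (mu_tilde m (2*J) / q ^ (2*J))).
    apply Rmult_le_compat_l. lra. apply Rle_abs.
    apply Rle_trans with (Q * m ^ A * (Cm / m ^ J)).
    apply Rmult_le_compat; try lra. apply Rabs_pos.
    unfold W, J. rewrite pow_add. right. field. split; apply pow_nonzero; lra. }
  assert (HTe1 : Kt r n * (mu_tilde m (2*h) / q ^ (2*h)) <= Kt r n * W).
  { apply Rmult_le_compat_l. apply Kt_nonneg. eapply Rle_trans. apply Rle_abs. exact X1b. }
  assert (HD : Rabs (sum_f_R0 v n - sum_f_R0 v (N - 1)) <= cN * W).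
  { destruct Hpar as [HN2|HN2].
    - replace (N - 1)%nat with n by (unfold n; lia). rewrite Rminus_diag, Rabs_R0.
      apply Rmult_le_pos. apply Rabs_pos. exact HW.
    - replace n with N by (unfold n; lia).
      destruct N as [|N']. lia.
      replace (S N' - 1)%nat with N' by lia. rewrite tech5.
      replace (sum_f_R0 v N' + v (S N') - sum_f_R0 v N') with (v (S N')) by ring.
      unfold v, cN. rewrite Rabs_mult. apply Rmult_le_compat_l. apply Rabs_pos.
      apply (fb m q Cm _ (Nat.div (S N') 2) h (S N')); try lra.
      + pose proof (Nat.div_mod (S N') 2 ltac:(lia)).
        pose proof (Nat.mod_upper_bound (S N') 2 ltac:(lia)). lia.
      + apply HB; [unfold J; lia| lra]. }
  match goal with |- _ <= ?X => replace X with (Kt r n * W + Q * W + cN * W)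
     by (unfold W, Q; field; lra) end.
  replace (E' + sum_f_R0 v n - sum_f_R0 v (N - 1)) with (E' + (sum_f_R0 v n - sum_f_R0 v (N - 1))) by ring.
  eapply Rle_trans. apply Rabs_triang. lra.
Qed.
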